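(* Let $\Gamma$ be a finite connected graph with vertex set $\mathcal{V}$ and Laplacian matrix $L = D - A$ (where $A$ is the adjacency matrix and $D$ the diagonal matrix of vertex degrees). Fix a prime $p$, and for each integer $i \ge 0$ let $e_i$ be the number of invariant factors of $L$ (i.e., diagonal entries of the Smith normal form of $L$ over $\mathbb{Z}$) that are divisible by $p^i$ but not by $p^{i+1}$. Let $\eta$ be an eigenvalue of $L$ with multiplicity $m$, and assume $\eta$ is an integer. Then: (1) if $p^i \mid \eta$, then $m \le 1 + \sum_{j \ge i} e_j$; (2) if $p^i \parallel \eta$ (that is, $p^i \mid \eta$ and $p^{i+1} \nmid \eta$), then $m \le \sum_{0 \le j \le i} e_j$.
   Context: The Smith normal form of an integer matrix $L$ is the unique diagonal matrix $\mathrm{diag}(s_1,\dots,s_v)$ with nonnegative entries, $s_i \mid s_{i+1}$, such that $ULV = \mathrm{diag}(s_1,\dots,s_v)$ for some unimodular integer matrices $U,V$; the $s_i$ are the invariant factors. For a connected graph exactly one invariant factor of $L$ is $0$. *)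

(* Defs.v *)
From mathcomp Require Import all_boot all_order all_algebra.
Set Implicit Arguments. Unset Strict Implicit. Unset Printing Implicit Defensive.
Import Order.TTheory GRing.Theory Num.Theory.
Local Open Scope ring_scope.

Definition simple_graph n (adj : rel 'I_n) : Prop :=
  symmetric adj /\ irreflexive adj.

Definition connected_graph n (adj : rel 'I_n) : Prop :=
  forall x y : 'I_n, connect adj x y.

Definition laplacian n (adj : rel 'I_n) : 'M[int]_n :=
  \matrix_(i, j)
    ((if i == j then (#|[set k | adj i k]|)%:Z else 0) - (adj i j : nat)%:Z).

Definition is_Smith_form n (L : 'M[int]_n) (d : 'I_n -> int) : Prop :=
  (forall k, 0 <= d k) /\
  (forall k l : 'I_n, (k <= l)%N -> (d k %| d l)%Z) /\
  exists U V : 'M[int]_n,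
    [/\ U \in unitmx, V \in unitmx & U *m L *m V = diag_mx (\row_k d k)].

Definition e_count n (d : 'I_n -> int) (p i : nat) : nat :=
  #|[set k : 'I_n | ((p ^ i)%:Z %| d k)%Z && ~~ ((p ^ i.+1)%:Z %| d k)%Z]|.

(* A bound beyond which all e_j vanish (for p >= 2): valuations of the nonzero
   invariant factors are < sum_k |d k| + 1. So the sum over j >= i is this
   finite sum. *)
Definition e_bound n (d : 'I_n -> int) : nat := (\sum_k `|d k|%N).+1.

Definition eig_mult n (L : 'M[int]_n) (eta : int) : nat :=
  mup (eta%:~R : rat) (char_poly (map_mx (intr : int -> rat) L)).

(* Main.v *)
Require Import Defs.
From mathcomp Require Import all_boot all_order all_algebra.
From mathcomp Require Import ring zify.
Set Implicit Arguments. Unset Strict Implicit. Unset Printing Implicit Defensive.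
Import Order.TTheory GRing.Theory Num.Theory.
Local Open Scope ring_scope.

Lemma rank_le_supp (F : fieldType) m n (A : 'M[F]_(m, n)) (S : {set 'I_n}) :
  (forall r j, j \notin S -> A r j = 0) -> (\rank A <= #|S|)%N.
Proof.
move=> H.
pose f := (fun i : 'I_#|S| => enum_val i).
pose E : 'M[F]_(#|S|, n) := \matrix_(i, j) ((f i == j)%:R).
have -> : A = colsub f A *m E.
  apply/matrixP => r j; rewrite !mxE.
  case: (boolP (j \in S)) => jS.
    rewrite (bigD1 (enum_rank_in jS j)) //= !mxE /f enum_rankK_in // eqxx mulr1.
    rewrite big1 ?addr0 // => i ne; rewrite !mxE.
    have -> : (enum_val i == j) = false.
      apply/negbTE; apply: contra ne => /eqP e.
      by have := enum_valK_in jS i; rewrite /= e => ->.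
    by rewrite mulr0.
  rewrite H // big1 // => i _; rewrite !mxE.
  have : f i \in S := enum_valP i.
  by case: eqP => [->|]; rewrite ?(negbTE jS) ?mulr0.
apply: leq_trans (mxrankM_maxl _ _) _; exact: rank_leq_col.
Qed.

Lemma rank_sel (F : fieldType) n (S : {set 'I_n}) (W : 'M[F]_n) :
  W \in unitmx -> \rank (rowsub (fun i : 'I_#|S| => enum_val i) W) = #|S|.
Proof.
move=> Wu; apply/eqP; rewrite eqn_leq rank_leq_row /=.
set f := (fun i : 'I_#|S| => enum_val i).
have e : rowsub f W *m (invmx W *m colsub f 1%:M) = 1%:M.
  rewrite mulmxA mul_rowsub_mx mulmxV // mulmx_colsub mulmx1.
  apply/matrixP => r s; rewrite !mxE /f (inj_eq enum_val_inj) //.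
have := mxrankM_maxl (rowsub f W) (invmx W *m colsub f 1%:M).
by rewrite e mxrank1.
Qed.

Lemma cnt_int p n (W : 'M[int]_n) (Z S : {set 'I_n}) : prime p -> W \in unitmx ->
  (forall r j, r \in Z -> j \notin S -> (p%:Z %| W r j)%Z) -> (#|Z| <= #|S|)%N.
Proof.
move=> pp Wu H.
pose Wp := map_mx (intr : int -> 'F_p) W.
have Wpu : Wp \in unitmx.
  by rewrite unitmxE det_map_mx; apply: rmorph_unit; rewrite -unitmxE.
rewrite -(rank_sel Z Wpu); apply: rank_le_supp => r j jS.
rewrite !mxE; have /dvdzP [q ->] := H _ _ (enum_valP r) jS.
by rewrite intrM -natz rmorph_nat pchar_Fp_0 // mulr0.
Qed.

Lemma sqnorm0 (R : realFieldType) n (w : 'rV[R]_n) : w *m w^T = 0 -> w = 0.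
Proof.
move=> /matrixP /(_ 0 0); rewrite !mxE => /eqP; rewrite psumr_eq0 => [/allP H|].
  apply/rowP => j; rewrite mxE; have := H j (mem_index_enum j).
  by rewrite implyTb mxE -expr2 sqrf_eq0 => /eqP.
by move=> j _; rewrite mxE -expr2 sqr_ge0.
Qed.

Lemma char_sim (F : fieldType) N n (e : N = n) (P : 'M[F]_(N, n)) (A : 'M_n)
  (G : 'M_N) : row_free P -> P *m A = G *m P -> char_poly A = char_poly G.
Proof.
case: n / e in P A *; move=> Pf PAG.
have Pu : P \in unitmx by rewrite -row_free_unit.
set Pp := map_mx polyC P.
have key : Pp *m char_poly_mx A = char_poly_mx G *m Pp.
  rewrite /char_poly_mx mulmxBr mulmxBl mul_mx_scalar mul_scalar_mx.
  by rewrite /Pp -!map_mxM PAG.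
have := congr1 determinant key; rewrite !det_mulmx [RHS]mulrC.
apply: mulfI; rewrite /Pp det_map_mx polyC_eq0 -unitfE -unitmxE //.
Qed.

Lemma alg_le_geo (R : realFieldType) n (A : 'M[R]_n) (a : R) : A^T = A ->
  (mup a (char_poly A) <= \rank (eigenspace A a))%N.
Proof.
move=> sym.
set E := eigenspace A a; set K := row_base E; set C0 := kermx K^T.
set C := row_base C0.
have KA : K *m A = a *: K by apply/eigenspaceP; rewrite eq_row_base submx_refl.
have CK : C *m K^T = 0 by apply/eqP; rewrite -sub_kermx eq_row_base submx_refl.
have CAs : (C *m A <= C)%MS.
  rewrite eq_row_base sub_kermx -mulmxA -{1}sym -trmx_mul KA linearZ /=.
  by rewrite -scalemxAr CK scaler0.
set B := C *m A *m pinvmx C.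
have CAB : C *m A = B *m C by rewrite mulmxKpV.
have orth : forall w : 'rV_n, (w <= K)%MS -> (w <= C)%MS -> w = 0.
  move=> w /submxP [u ->] wC; apply: sqnorm0.
  rewrite eq_row_base sub_kermx in wC.
  by rewrite trmx_mul mulmxA (eqP wC) mul0mx.
have cap0 : (K :&: C)%MS = 0.
  apply/eqP; rewrite -submx0; apply/rV_subP => v; rewrite sub_capmx.
  by case/andP => vK vC; rewrite (orth v vK vC) sub0mx.
have rk : (\rank E + \rank C0 = n)%N.
  by rewrite /C0 mxrank_ker (mxrank_tr K) /K eq_row_base subnKC // rank_leq_col.
pose P := col_mx K C.
have Pf : row_free P.
  rewrite /row_free /P -addsmxE mxrank_disjoint_sum // /K /C !eq_row_base.
  by [].
pose G := block_mx (a%:M : 'M_(\rank E)) 0 0 B.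
have PAG : P *m A = G *m P.
  by rewrite /P /G mul_col_mx mul_block_col KA CAB mul_scalar_mx !mul0mx addr0 add0r.
rewrite (char_sim rk Pf PAG) /char_poly /G char_block_diag_mx det_ublock.
rewrite -/(char_poly _) -/(char_poly _).
rewrite mupM ?monic_neq0 ?char_poly_monic //.
rewrite (char_poly_trig (scalar_mx_is_trig _ _)).
under eq_bigr do rewrite mxE eqxx mulr1n.
rewrite prodr_const card_ord mup_XsubCX eqxx mupNroot ?addn0 //.
rewrite -eigenvalue_root_char; apply/eigenvalueP => -[v vB vn0].
set w := v *m C.
have wA : w *m A = a *: w by rewrite /w -mulmxA CAB mulmxA vB scalemxAl.
have wK : (w <= K)%MS by rewrite eq_row_base; apply/eigenspaceP.
have wC : (w <= C)%MS by apply: submxMl.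
have := orth w wK wC; move/eqP; rewrite /w mulmx_free_eq0 ?row_base_free //.
by rewrite (negbTE vn0).
Qed.

Lemma lap_sym n (adj : rel 'I_n) : simple_graph adj ->
  (laplacian adj)^T = laplacian adj.
Proof.
move=> [sym _]; apply/matrixP => i j; rewrite !mxE (sym i j) eq_sym.
by case: eqP => // ->.
Qed.

Lemma deg_sum n (adj : rel 'I_n) j :
  (#|[set k | adj j k]|)%:Z = \sum_i (adj j i : nat)%:Z.
Proof.
rewrite -natz -sumr_const big_mkcond /=; apply: eq_bigr => i _.
by rewrite inE; case: (adj j i).
Qed.

Lemma lap_const n (adj : rel 'I_n) (u : 'rV[int]_n) :
  simple_graph adj -> connected_graph adj -> u *m laplacian adj = 0 ->
  forall a b, u 0 a = u 0 b.
Proof.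
move=> [sym irr] conn uL.
pose x i := u 0 i.
pose Ad i j := (adj i j : nat)%:Z.
have hj : forall j, \sum_i Ad i j * (x j - x i) = 0.
  move=> j; transitivity (\sum_i u 0 i * laplacian adj i j); last first.
    by move/matrixP: uL => /(_ 0 j); rewrite !mxE.
  under [RHS]eq_bigr do rewrite mxE mulrBr.
  rewrite sumrB [in RHS](bigD1 j) //= eqxx [in RHS]big1 ?addr0; last first.
    by move=> i ne; rewrite (negbTE ne) mulr0.
  rewrite deg_sum mulr_sumr.
  under eq_bigr do rewrite mulrBr.
  rewrite sumrB; congr (_ - _); apply: eq_bigr => i _; rewrite /Ad /x mulrC.
    by do 3 f_equal; apply: sym.
  by rewrite mulrC.
have S0 : \sum_j \sum_i Ad i j * (x j - x i) ^+ 2 = 0.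
  have e1 : \sum_j \sum_i Ad i j * (x j - x i) ^+ 2 =
     \sum_j \sum_i Ad i j * x j * (x j - x i) +
     \sum_j \sum_i Ad i j * x i * (x i - x j).
    rewrite -big_split; apply: eq_bigr => j _ /=; rewrite -big_split.
    by apply: eq_bigr => i _ /=; ring.
  have e2 : \sum_j \sum_i Ad i j * x i * (x i - x j) =
            \sum_j \sum_i Ad i j * x j * (x j - x i).
    rewrite exchange_big; apply: eq_bigr => j _; apply: eq_bigr => i _.
    by rewrite /Ad (sym i j).
  have e3 : \sum_j \sum_i Ad i j * x j * (x j - x i) = 0.
    rewrite big1 // => j _.
    transitivity (x j * \sum_i Ad i j * (x j - x i)); last by rewrite hj mulr0.
    rewrite mulr_sumr.
    by apply: eq_bigr => i _; ring.
  by rewrite e1 e2 e3 addr0.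
have edge : forall i j, adj i j -> x i = x j.
  move=> i j aij.
  move/eqP: S0; rewrite psumr_eq0 => [/allP /(_ j (mem_index_enum j))|]; last first.
    move=> k _; apply: sumr_ge0 => l _; apply: mulr_ge0; first by [].
    exact: sqr_ge0.
  rewrite implyTb psumr_eq0 => [/allP /(_ i (mem_index_enum i))|]; last first.
    move=> l _; apply: mulr_ge0; first by []; exact: sqr_ge0.
  rewrite implyTb /Ad aij mul1r sqrf_eq0 subr_eq0 => /eqP ->.
  by [].
move=> a b; have /connectP [s pth ->] := conn a b.
elim: s a pth => [|c s IH] a //= /andP [ac pth].
by rewrite -(IH c pth); exact: (edge a c ac).
Qed.

Lemma zero_le1 n (adj : rel 'I_n) (U V : 'M[int]_n) (d : 'I_n -> int) :
  simple_graph adj -> connected_graph adj -> U \in unitmx -> V \in unitmx ->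
  U *m laplacian adj *m V = diag_mx (\row_k d k) ->
  (#|[set k | d k == 0]| <= 1)%N.
Proof.
move=> sg conn Uu Vu UL.
have rowz : forall k, d k == 0 -> row k U *m laplacian adj = 0.
  move=> k dk.
  have : row k (U *m laplacian adj *m V) = 0.
    by rewrite UL; apply/rowP => j; rewrite !mxE (eqP dk) mul0rn.
  rewrite !row_mul => /(congr1 (mulmx ^~ (invmx V))).
  by rewrite mulmxK // mul0mx.
apply/card_le1_eqP => k l; rewrite !inE => dk dl.
apply/eqP; apply/negPn/negP => nkl.
have ck := lap_const sg conn (rowz k dk).
have cl := lap_const sg conn (rowz l dl).
pose v : 'rV[int]_n := U l k *: delta_mx 0 k - U k k *: delta_mx 0 l.
have vU : v *m U = 0.
  apply/rowP => j; rewrite /v mulmxBl -!scalemxAl -!rowE !mxE.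
  have := ck j k; have := cl j k; rewrite !mxE => -> ->.
  by rewrite mulrC subrr.
have v0 : v = 0 by rewrite -[v](mulmxK Uu) vU mul0mx.
have ckk : U k k = 0.
  move/rowP: v0 => /(_ l); rewrite !mxE (negbTE nkl) !eqxx /= mulr0 mulr1 sub0r.
  by move/eqP; rewrite oppr_eq0 => /eqP.
have : (delta_mx 0 k : 'rV[int]_n) *m U = 0.
  apply/rowP => j; rewrite -rowE !mxE.
  by have := ck j k; rewrite !mxE => ->.
move/(congr1 (mulmx ^~ (invmx U))); rewrite mulmxK // mul0mx.
move/matrixP => /(_ 0 k); rewrite !mxE !eqxx.
by [].
Qed.

Lemma cardU_le (T : finType) (A B : {set T}) : (#|A :|: B| <= #|A| + #|B|)%N.
Proof. by rewrite cardsU leq_subr. Qed.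

Lemma cnt2 n (d : 'I_n -> int) p i :
  (#|[set j | ~~ ((p ^ i.+1)%:Z %| d j)%Z]| <= \sum_(0 <= j < i.+1) e_count d p j)%N.
Proof.
elim: i => [|i IH].
  rewrite big_nat1 /e_count; apply: subset_leq_card; apply/subsetP => j.
  by rewrite !inE expn0 dvd1z.
rewrite big_nat_recr //=.
apply: leq_trans (subset_leq_card (_ : _ \subset
   [set j | ~~ ((p ^ i.+1)%:Z %| d j)%Z] :|:
   [set k | ((p ^ i.+1)%:Z %| d k)%Z && ~~ ((p ^ i.+2)%:Z %| d k)%Z])) _.
  apply/subsetP => j; rewrite !inE => nd.
  by case: (boolP ((p ^ i.+1)%:Z %| d j)%Z) => h; rewrite ?nd ?orbT.
by apply: leq_trans (cardU_le _ _) _; rewrite leq_add2r.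
Qed.

Lemma cnt1 n (d : 'I_n -> int) p i t :
  (#|[set j | ((p ^ i)%:Z %| d j)%Z]| <=
   \sum_(i <= j < i + t) e_count d p j + #|[set j | ((p ^ (i + t))%:Z %| d j)%Z]|)%N.
Proof.
elim: t => [|t IH]; first by rewrite addn0 big_geq // add0n.
rewrite addnS big_nat_recr ?leq_addr //=; apply: leq_trans IH _.
rewrite -addnA leq_add2l.
apply: leq_trans (subset_leq_card (_ : _ \subset
   [set k | ((p ^ (i + t))%:Z %| d k)%Z && ~~ ((p ^ (i + t).+1)%:Z %| d k)%Z] :|:
   [set j | ((p ^ (i + t).+1)%:Z %| d j)%Z])) _.
  apply/subsetP => j; rewrite !inE => nd.
  by rewrite nd /=; case: (boolP ((p ^ (i + t).+1)%:Z %| d j)%Z).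
exact: cardU_le.
Qed.

Lemma big_zero n (d : 'I_n -> int) p j : prime p -> (e_bound d <= j)%N ->
  [set k | ((p ^ j)%:Z %| d k)%Z] \subset [set k | d k == 0].
Proof.
move=> pp hB; apply/subsetP => k; rewrite !inE => h; apply/negPn/negP => dk.
have h1 : (p ^ j <= `|d k|)%N by apply: dvdn_leq; [rewrite absz_gt0 | exact: h].
have h2 : (`|d k| < e_bound d)%N by rewrite /e_bound ltnS (bigD1 k) //= leq_addr.
have h3 := ltn_expl j (prime_gt1 pp).
move: h1 h2 h3; set P := (p ^ j)%N; set D := `|d k|%N; set B := e_bound d.
move: hB; rewrite -/B; lia.
Qed.

Lemma cnt1' n (d : 'I_n -> int) p i : prime p ->
  (#|[set k | d k == 0]| <= 1)%N ->
  (#|[set j | ((p ^ i)%:Z %| d j)%Z]| <= 1 + \sum_(i <= j < e_bound d) e_count d p j)%N.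
Proof.
move=> pp h0; case: (leqP i (e_bound d)) => hi.
  have := cnt1 d p i (e_bound d - i); rewrite subnKC // => h.
  apply: leq_trans h _; rewrite addnC leq_add2r.
  apply: leq_trans (subset_leq_card (big_zero pp (leqnn _))) h0.
rewrite big_geq ?(ltnW hi) // addn0.
apply: leq_trans (subset_leq_card (big_zero pp (ltnW hi))) h0.
Qed.

Lemma dvd_fact1 p i (a b : int) : prime p -> ((p ^ i)%:Z %| a * b)%Z ->
  ~~ ((p ^ i)%:Z %| b)%Z -> (p%:Z %| a)%Z.
Proof.
rewrite !dvdzE abszM /=; move: `|a|%N `|b|%N => a' b' pp H nb.
apply: contraR nb => na.
have : coprime p a' by rewrite prime_coprime.
move/(coprimeXl i) => co.
by rewrite -(Gauss_dvdr _ co).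
Qed.

Lemma dvd_fact2 p i (a b : int) : prime p -> ((p ^ i)%:Z %| a)%Z ->
  ~~ ((p ^ i.+1)%:Z %| a)%Z -> ((p ^ i.+1)%:Z %| a * b)%Z -> (p%:Z %| b)%Z.
Proof.
rewrite !dvdzE abszM /=; move: `|a|%N `|b|%N => a' b' pp ha na H.
have ea := divnK ha; set q := (a' %/ p ^ i)%N in ea.
have nq : ~~ (p %| q)%N.
  apply: contra na => /dvdnP [r er]; rewrite -ea er expnSr.
  by rewrite mulnC dvdn_mul // ?dvdnn // dvdn_mull.
move: H; rewrite -ea expnSr [(q * _)%N]mulnC -mulnA dvdn_pmul2l ?expn_gt0 ?prime_gt0 //.
by rewrite Euclid_dvdM // (negbTE nq).
Qed.

Theorem lemma2p2 (n : nat) (adj : rel 'I_n) (p : nat) (d : 'I_n -> int)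
    (eta : int) :
  simple_graph adj -> connected_graph adj -> prime p ->
  is_Smith_form (laplacian adj) d ->
  eigenvalue (map_mx (intr : int -> rat) (laplacian adj)) (eta%:~R) ->
  forall i : nat,
    (((p ^ i)%:Z %| eta)%Z ->
       (eig_mult (laplacian adj) eta <=
          1 + \sum_(i <= j < e_bound d) e_count d p j)%N) /\
    (((p ^ i)%:Z %| eta)%Z -> ~~ ((p ^ i.+1)%:Z %| eta)%Z ->
       (eig_mult (laplacian adj) eta <= \sum_(0 <= j < i.+1) e_count d p j)%N).
Proof.
move=> sg conn pp [_ [_ [U [V [Uu Vu UL]]]]] _ i.
set L := laplacian adj.
have [Pm Pmu [Qm Qmu [c _ Mdec]]] := int_Smith_normal_form (L - eta%:M).
set Dm := (X in Pm *m X *m Qm) in Mdec.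
set Z := [set k : 'I_n | c`_k == 0].
set Pi := invmx Pm.
have PiM : Pi *m (L - eta%:M) = Dm *m Qm by rewrite Mdec -mulmxA mulKmx.
have eigrow : forall k, k \in Z -> row k Pi *m L = eta *: row k Pi.
  move=> k; rewrite inE => /eqP ck.
  have : row k (Pi *m (L - eta%:M)) = 0.
    rewrite PiM row_mul (_ : row k Dm = 0) ?mul0mx //.
    by apply/rowP => j; rewrite !mxE ck mul0rn.
  by rewrite row_mul mulmxBr mul_mx_scalar => /eqP; rewrite subr_eq0 => /eqP.
have key : forall k j, k \in Z -> (Pi *m invmx U) k j * d j = eta * (Pi *m V) k j.
  move=> k j kZ.
  have : row k (Pi *m invmx U) *m diag_mx (\row_j0 d j0) = eta *: row k (Pi *m V).
    by rewrite -UL !row_mul !mulmxA mulmxKV // eigrow // scalemxAl.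
  by move/matrixP => /(_ 0 j); rewrite mul_mx_diag !mxE.
have mult : (eig_mult L eta <= #|Z|)%N.
  rewrite /eig_mult.
  set Lq := map_mx (intr : int -> rat) L.
  have symq : Lq^T = Lq by rewrite /Lq map_trmx /L lap_sym.
  apply: leq_trans (alg_le_geo _ symq) _.
  set E := eigenspace Lq _.
  have unitq : forall W : 'M[int]_n, W \in unitmx -> map_mx (intr : int -> rat) W \in unitmx.
    by move=> W Wu; rewrite unitmxE det_map_mx; apply: rmorph_unit; rewrite -unitmxE.
  have Pqf : row_free (map_mx (intr : int -> rat) Pm) by rewrite row_free_unit unitq.
  rewrite -(mxrankMfree E Pqf).
  apply: rank_le_supp => r j jZ.
  have Dq : map_mx (intr : int -> rat) Dm = diag_mx (\row_k ((c`_k)%:~R : rat)).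
    by apply/matrixP => a b; rewrite !mxE rmorphMn.
  have : E *m (Lq - (eta%:~R)%:M) = 0 by apply/eqP; rewrite -sub_kermx submx_refl.
  rewrite (_ : Lq - _ = map_mx (intr : int -> rat) (L - eta%:M)); last first.
    by rewrite map_mxB map_scalar_mx.
  rewrite Mdec !map_mxM !mulmxA.
  move/(congr1 (mulmx^~ (invmx (map_mx (intr : int -> rat) Qm)))).
  rewrite mulmxK ?unitq // mul0mx Dq.
  move/matrixP => /(_ r j); rewrite mul_mx_diag !mxE => /eqP.
  rewrite mulf_eq0 intr_eq0 => /orP [/eqP //|].
  by rewrite inE in jZ; rewrite (negbTE jZ).
split.
  move=> hdiv; apply: leq_trans mult _.
  apply: leq_trans (cnt1' i pp (zero_le1 sg conn Uu Vu UL)).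
  apply: (cnt_int (W := Pi *m invmx U) pp).
    by rewrite unitmx_mul !unitmx_inv Uu Pmu.
  move=> r j rZ; rewrite inE => nj.
  apply: (dvd_fact1 (i := i) (b := d j) pp _ nj).
  by rewrite key //; exact: dvdz_mulr.
move=> hdiv nd; apply: leq_trans mult _.
apply: leq_trans (cnt2 d p i).
apply: (cnt_int (W := Pi *m V) pp).
  by rewrite unitmx_mul !unitmx_inv Vu Pmu.
move=> r j rZ; rewrite inE negbK => hj.
apply: (dvd_fact2 (i := i) (a := eta) pp hdiv nd).
by rewrite -key //; exact: dvdz_mull.
Qed.
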